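(* Let $n\ge 1$, let $x_1,\dots,x_n$ be distinct integers each greater than $1$, and let $D=\{1,x_1,\dots,x_n\}$. Then $\sigma(D)=2-n+\sum_{i=1}^n x_i$.
   Context: A signed tree is a pair $(T,s)$ where $T$ is a finite tree and $s:E(T)\to\{+,-\}$. The signed degree $sdeg(v)$ of a vertex is the number of incident positive edges minus the number of incident negative edges. $(T,s)$ realizes (satisfies) a set $D$ of integers if $D=\{sdeg(v):v\in V(T)\}$. For a set $D$ containing $1$ or $-1$, $\sigma(D)=\min\{|V(T)|: \text{some signed tree }(T,s)\text{ realizes }D\}$. *)

(* Defs.v *)
From mathcomp Require Import all_boot all_order all_algebra.
Set Implicit Arguments. Unset Strict Implicit. Unset Printing Implicit Defensive.
Import Order.TTheory GRing.Theory Num.Theory.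
Local Open Scope ring_scope.

Definition simple_graph (N : nat) (e : rel 'I_N) : Prop :=
  symmetric e /\ irreflexive e.

Definition graph_connected (N : nat) (e : rel 'I_N) : Prop :=
  forall u v : 'I_N, connect e u v.

Definition acyclic (N : nat) (e : rel 'I_N) : Prop :=
  ~ (exists c : seq 'I_N, [/\ (3 <= size c)%N, uniq c & cycle e c]).

Definition is_tree (N : nat) (e : rel 'I_N) : Prop :=
  [/\ (0 < N)%N, simple_graph e, graph_connected e & acyclic e].

(* A signing s (true = '+', false = '-'); only its values on edges matter;
   it is required to be symmetric so that it is a function of the edge. *)
Definition signing (N : nat) (s : 'I_N -> 'I_N -> bool) : Prop :=
  forall u v, s u v = s v u.

Definition signed_tree (N : nat) (e : rel 'I_N) (s : 'I_N -> 'I_N -> bool) :=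
  is_tree e /\ signing s.

Definition sdeg (N : nat) (e : rel 'I_N) (s : 'I_N -> 'I_N -> bool)
  (v : 'I_N) : int :=
  (#|[set u | e v u && s v u]|%:Z - #|[set u | e v u && ~~ s v u]|%:Z).

Definition realizes (N : nat) (e : rel 'I_N) (s : 'I_N -> 'I_N -> bool)
  (D : int -> Prop) : Prop :=
  forall d : int, D d <-> exists v : 'I_N, sdeg e s v = d.

Definition is_sigma (D : int -> Prop) (m : nat) : Prop :=
  (exists (e : rel 'I_m) (s : 'I_m -> 'I_m -> bool),
      signed_tree e s /\ realizes e s D) /\
  (forall (N : nat) (e : rel 'I_N) (s : 'I_N -> 'I_N -> bool),
      signed_tree e s -> realizes e s D -> (m <= N)%N).

(* Main.v *)
Require Import Defs.
From mathcomp Require Import all_boot all_order all_algebra.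
From mathcomp Require Import zify.
Set Implicit Arguments. Unset Strict Implicit. Unset Printing Implicit Defensive.

Section Bound.
Variable N : nat.
Variable e : rel 'I_N.
Hypothesis esym : symmetric e.
Hypothesis eirr : irreflexive e.
Hypothesis eacyc : acyclic e.

Definition degS (S : {set 'I_N}) v := \sum_(u in S) (e v u : nat).

Lemma noext_leaf (S : {set 'I_N}) x q : uniq (x :: q) -> path e x q ->
  (forall y, y \in S -> e x y -> y \in x :: q) -> degS S x <= 1.
Proof.
move=> Hu Hp Hy.
case: q Hu Hp Hy => [|a q'] Hu Hp Hy.
  rewrite /degS big1 // => u uS; case Exu: (e x u) => //.
  by move: (Hy u uS Exu); rewrite inE => /eqP Hux; rewrite Hux eirr in Exu.
have H : forall u, u \in S -> (e x u : nat) <= (u == a).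
  move=> u uS; case Exu: (e x u) => //=.
  move: (Hy u uS Exu); rewrite !inE => /or3P [/eqP Hux|->//|uq'].
    by rewrite Hux eirr in Exu.
  exfalso; apply: eacyc.
  case/splitPr: uq' Hu Hp => q1 q2 Hu Hp.
  exists (x :: a :: rcons q1 u); split.
  - by rewrite /= size_rcons.
  - by move: Hu; rewrite -cat_rcons -2!cat_cons cat_uniq => /and3P [].
  - rewrite /cycle rcons_path; move: Hp; rewrite -cat_rcons -cat_cons cat_path.
    case/andP=> -> _ /=; rewrite last_rcons esym; exact: Exu.
rewrite /degS. apply: (@leq_trans (\sum_(u in S) (u == a : nat))); first exact: leq_sum.
apply: (@leq_trans (\sum_u (u == a : nat))).
  by rewrite [X in _ <= X](bigID (mem S)) /= leq_addr.
by rewrite (bigD1 a) //= eqxx big1 // => u /negbTE ->.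
Qed.

Lemma leaf_aux (S : {set 'I_N}) d : forall x q, N - size (x :: q) <= d -> uniq (x :: q) ->
  all (mem S) (x :: q) -> path e x q -> exists2 y, y \in S & degS S y <= 1.
Proof.
elim: d => [|d IH] x q Hd Hu Ha Hp.
  case: (boolP [exists y, [&& y \in S, e x y & y \notin x :: q]]).
    case/existsP => y /and3P [yS Exy yn].
    have : uniq (y :: x :: q) by apply/andP; split.
    move/card_uniqP => Hc; have := max_card (mem (y :: x :: q)).
    rewrite Hc card_ord /=; move: Hd => /=; lia.
  rewrite negb_exists => /forallP Hn.
  exists x; first by move: Ha => /= /andP [].
  apply: (noext_leaf Hu Hp) => y yS Exy.
  by move: (Hn y); rewrite yS Exy /= negbK.
case: (boolP [exists y, [&& y \in S, e x y & y \notin x :: q]]).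
  case/existsP => y /and3P [yS Exy yn].
  apply: (IH y (x :: q)).
  - by move: Hd => /=; lia.
  - by apply/andP; split.
  - by rewrite /= yS.
  - by rewrite /= esym Exy.
rewrite negb_exists => /forallP Hn.
exists x; first by move: Ha => /= /andP [].
apply: (noext_leaf Hu Hp) => y yS Exy.
by move: (Hn y); rewrite yS Exy /= negbK.
Qed.

Lemma leaf_exists (S : {set 'I_N}) x : x \in S -> exists2 y, y \in S & degS S y <= 1.
Proof.
move=> xS; apply: (@leaf_aux S N x [::]) => //=; first lia.
by rewrite xS.
Qed.

Lemma edge_bound k : forall S : {set 'I_N}, #|S| = k.+1 ->
  \sum_(v in S) degS S v + 2 <= 2 * #|S|.
Proof.
elim: k => [|k IH] S HS.
  have [x xS] : exists x, x \in S.
    by apply/set0Pn; rewrite -card_gt0 HS.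
  have S1 : S = [set x].
    apply/eqP; rewrite eq_sym eqEcard sub1set xS cards1 HS //.
  rewrite S1 big_set1 /degS big_set1 eirr cards1 //.
have [x0 x0S] : exists x, x \in S.
  by apply/set0Pn; rewrite -card_gt0 HS.
have [x xS Hx] := leaf_exists x0S.
set S' := S :\ x.
have HS' : #|S'| = k.+1 by move: (cardsD1 x S); rewrite xS HS => /= [[]].
have Hd : forall v, v \in S -> degS S v = (e v x : nat) + degS S' v.
  move=> v vS; rewrite /degS (bigD1 x) //=; congr (_ + _).
  by apply: eq_bigl => u; rewrite !inE andbC.
have E1 : \sum_(v in S) degS S v = degS S x + \sum_(v in S') degS S v.
  rewrite (bigD1 x) //=; congr (_ + _).
  by apply: eq_bigl => u; rewrite !inE andbC.
have E2 : \sum_(v in S') degS S v = degS S x + \sum_(v in S') degS S' v.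
  rewrite (eq_bigr (fun v => (e v x : nat) + degS S' v)); last first.
    by move=> v; rewrite inE => /andP [_ vS]; apply: Hd.
  rewrite big_split /=; congr (_ + _).
  rewrite Hd // eirr add0n /degS; apply: eq_bigr => v _; by rewrite esym.
have := IH S' HS'.
rewrite E1 E2 (cardsD1 x S) xS -/S'.
move: Hx; lia.
Qed.

End Bound.
Section Parent.
Variable ps : seq nat.
Hypothesis valid : forall i, i < size ps -> nth 0 ps i <= i.
Let m := (size ps).+1.

Definition par (u : 'I_m) : nat := nth 0 ps u.-1.
Definition pe : rel 'I_m := fun u v =>
  ((0 < u) && (par u == v)) || ((0 < v) && (par v == u)).

Lemma par_lt (u : 'I_m) : 0 < u -> par u < u.
Proof.
move=> u0; rewrite /par; have := valid (i := u.-1).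
have := ltn_ord u; rewrite /m.
case: (nat_of_ord u) u0 => [//|k] _ /=; rewrite ltnS => H1 /(_ H1); lia.
Qed.

Lemma pe_sym : symmetric pe.
Proof. by move=> u v; rewrite /pe orbC. Qed.

Lemma pe_irr : irreflexive pe.
Proof.
move=> u; rewrite /pe orbb; apply/negP => /andP [u0 /eqP H].
by have := par_lt u0; rewrite H ltnn.
Qed.

Lemma pe_lt (w a : 'I_m) : a < w -> pe w a -> par w = a.
Proof.
move=> aw; rewrite /pe => /orP [/andP [_ /eqP] //|/andP [a0 /eqP H]].
by have := par_lt a0; rewrite H; lia.
Qed.

Lemma seq_max (c : seq 'I_m) a :
  exists2 w, w \in a :: c & forall u, u \in a :: c -> u <= w.
Proof.
elim: c a => [|b c IH] a.
  by exists a; rewrite ?inE // => u; rewrite inE => /eqP ->.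
have [w wi Hw] := IH b.
case: (leqP a w) => Haw.
  exists w; first by rewrite inE wi orbT.
  by move=> u; rewrite inE => /orP [/eqP ->|]; [|apply: Hw].
exists a; first by rewrite inE eqxx.
move=> u; rewrite inE => /orP [/eqP ->//|/Hw]; lia.
Qed.

Lemma pe_acyclic : acyclic pe.
Proof.
move=> [c [Hs Hu Hc]].
case: c Hs Hu Hc => [//|c0 c1] Hs Hu Hc.
have [w wc Hw] := seq_max c1 c0.
move: (rot_index wc) => /=.
set q := (drop _ _ ++ take _ _) => Hr.
have Hu' : uniq (w :: q) by rewrite -Hr rot_uniq.
have Hc' : cycle pe (w :: q) by rewrite -Hr rot_cycle.
have Hq : forall u, u \in q -> u \in c0 :: c1.
  by move=> u uq; rewrite -(mem_rot (index w (c0 :: c1))) Hr inE uq orbT.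
have Hsz : 2 <= size q.
  have := size_rot (index w (c0 :: c1)) (c0 :: c1); rewrite Hr /=.
  move: Hs => /=; lia.
case: q Hu' Hc' Hq Hsz {Hr} => [//|a [//|b q'']] Hu' Hc' Hq _.
set l := last b q''.
have lq : l \in b :: q'' by apply: mem_last.
move: Hc'; rewrite /cycle /= => /andP [Ewa].
rewrite rcons_path => /andP [_] /andP [_ Elw].
have Hlt : forall u, u \in [:: a, b & q''] -> u < w.
  move=> u uq; have := Hw u (Hq u uq); rewrite leq_eqVlt => /orP [|//].
  move=> /eqP/val_inj Huw; move: Hu'; rewrite /= -Huw uq //.
have E1 := pe_lt (Hlt a (mem_head _ _)) Ewa.
have E2 : par w = l.
  apply: pe_lt; first by apply: Hlt; rewrite inE lq orbT.
  by rewrite pe_sym.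
move: Hu'; rewrite /= => /and3P [_ Ha _].
move: Ha; rewrite (_ : a = l) ?lq //.
by apply: val_inj => /=; rewrite -E1 -E2.
Qed.

Lemma pe_tree : is_tree pe.
Proof.
split => //.
- by split; [apply: pe_sym | apply: pe_irr].
- have H0 : forall k (u : 'I_m), u <= k -> connect pe u ord0.
    elim=> [|k IH] u Hu.
      by have -> : u = ord0 by apply: val_inj => /=; lia.
    case: (posnP u) => u0.
      by have -> : u = ord0 by apply: val_inj => /=; lia.
    have pm : par u < m by have := par_lt u0; have := ltn_ord u; lia.
    apply: (connect_trans (y := Ordinal pm)).
      apply: connect1; rewrite /pe u0 /= eqxx //.
    apply: IH => /=; have := par_lt u0; lia.
  move=> u v; apply: (connect_trans (y := ord0)); first exact: (H0 u).
  by rewrite (sym_connect_sym pe_sym); apply: (H0 v).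
- exact: pe_acyclic.
Qed.


Lemma card_sum_bool (T : finType) (P : pred T) :
  #|[set u | P u]| = \sum_u (P u : nat).
Proof.
rewrite -sum1dep_card big_mkcond /=; apply: eq_bigr => u _; by case: (P u).
Qed.

Lemma pe_deg (v : 'I_m) : #|[set u | pe v u]| = (0 < v) + count (pred1 (val v)) ps.
Proof.
rewrite card_sum_bool.
rewrite (eq_bigr (fun u : 'I_m => ((0 < v) && (par v == val u) : nat) + ((0 < u) && (par u == val v)))); last first.
  move=> u _; rewrite /pe.
  case: (boolP ((0 < v) && (par v == u))) => [/andP [v0 /eqP H1]|] /=.
    case: (boolP ((0 < u) && (par u == v))) => [/andP [u0 /eqP H2]|] //=.
    by have := par_lt v0; have := par_lt u0; lia.
  by case: ((0 < u) && (par u == v)).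
rewrite big_split /=; congr (_ + _).
  case: (posnP v) => v0.
    by rewrite big1 ?v0 // => u _; rewrite v0.
  have pm : par v < m by have := par_lt v0; have := ltn_ord v; lia.
  rewrite (bigD1 (Ordinal pm)) //= eqxx big1 // => u Hu.
  by case: eqP => // Hp; case/eqP: Hu; apply: val_inj.
rewrite big_ord_recl /= add0n -sum1_count big_mkcond (big_nth 0) big_mkord /=.
rewrite [RHS]big_mkcond; apply: eq_bigr => i _; rewrite /par /=; by case: (_ == _).
Qed.

End Parent.
Section Blocks.
Variable y : nat -> nat.
Variable n : nat.
Hypothesis Hy : forall k, k < n -> 2 <= y k.

Fixpoint blocks (j : nat) : seq nat :=
  if j is j'.+1 then blocks j' ++ nseq (if j' == 0 then y 0 else (y j').-1) j'
  else [::].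

Lemma size_blocks j : 0 < j -> j <= n ->
  size (blocks j) + j = (\sum_(k < j) y k) + 1.
Proof.
elim: j => [//|[|j] IH] _ Hj.
  by rewrite /= big_ord1 size_nseq addn1.
rewrite /= size_cat size_nseq big_ord_recr /= -/(blocks j.+1).
have := IH erefl (ltnW Hj); have := Hy Hj. rewrite (_ : \sum_(i < j.+1) y i = \sum_(k < j.+1) y k) //. move: (\sum_(k < j.+1) y k) => S. lia.
Qed.

Lemma size_blocks_ge j : j <= n -> j <= size (blocks j).
Proof.
elim: j => [//|[|j] IH] Hj.
  by rewrite /= size_nseq; have := Hy Hj; lia.
rewrite /= size_cat size_nseq -/(blocks j.+1).
have := IH (ltnW Hj); have := Hy Hj; lia.
Qed.

Lemma blocks_valid j : j <= n ->
  forall i, i < size (blocks j) -> nth 0 (blocks j) i <= i.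
Proof.
elim: j => [//|j IH] Hj i.
rewrite /= size_cat nth_cat => Hi; case: ifP => Hi2.
  by apply: (IH (ltnW Hj)).
rewrite nth_nseq; case: ifP => // _.
have := size_blocks_ge (ltnW Hj); lia.
Qed.

Lemma count_blocks j v : count (pred1 v) (blocks j) =
  if v < j then (if v == 0 then y 0 else (y v).-1) else 0.
Proof.
elim: j => [//|j IH] /=.
rewrite count_cat count_nseq IH /= ltnS.
case: (ltngtP v j) => [H|H|->]; rewrite ?eqxx ?ltnn /=.
- by rewrite mul0n addn0.
- by rewrite mul0n.
- by rewrite mul1n.
Qed.

End Blocks.

Import Order.TTheory GRing.Theory Num.Theory.
Local Open Scope ring_scope.

Theorem mainTheorem8 (n : nat) (x : 'I_n -> int) :
  (1 <= n)%N -> injective x -> (forall i, 1 < x i) ->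
  exists m : nat,
    is_sigma (fun d : int => d = 1 \/ exists i, d = x i) m /\
    m%:Z = 2 - n%:Z + \sum_(i < n) x i.
Proof.
move=> n1 xinj xgt1.
pose y k := if insub k is Some i then absz (x i) else 0%N.
have yi : forall i : 'I_n, y i = absz (x i) by move=> i; rewrite /y valK.
have Hy : forall k, (k < n)%N -> (2 <= y k)%N.
  move=> k kn; have -> : k = val (Ordinal kn) by [].
  rewrite yi; have := xgt1 (Ordinal kn); lia.
set ps := blocks y n.
have Hv := blocks_valid Hy (leqnn n).
have Hsz := size_blocks Hy n1 (leqnn n).
have Hcnt := count_blocks y n.
have Hsum : ((\sum_(k < n) y k)%N)%:Z = \sum_(i < n) x i.
  rewrite (eq_bigr (fun i : 'I_n => absz (x i))); last by move=> i _; rewrite yi.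
  rewrite (big_morph Posz PoszD (erefl 0%:Z)).
  by apply: eq_bigr => i _; have := xgt1 i; lia.
have Hy2 : (2 * n <= \sum_(k < n) y k)%N.
  apply: (@leq_trans (\sum_(k < n) 2)%N).
    by rewrite sum_nat_const card_ord mulnC.
  by apply: leq_sum => i _; apply: Hy.
pose m := (size ps).+1.
have Hm : m%:Z = 2 - n%:Z + \sum_(i < n) x i.
  rewrite -Hsum /m; move: Hsz Hy2; rewrite -/ps.
  move: (\sum_(k < n) y k)%N => Sy; lia.
exists m; split => //; split.
- exists (@pe ps), (fun _ _ => true); split.
    by split; [exact: pe_tree Hv | by []].
  have Hdeg : forall v : 'I_m, sdeg (@pe ps) (fun _ _ => true) v =
      (if (v < n)%N then y v else 1%N)%:Z.
    move=> v; rewrite /sdeg.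
    have -> : [set u | @pe ps v u && true] = [set u | @pe ps v u].
      by apply/setP => u; rewrite !inE andbT.
    have -> : [set u | @pe ps v u && ~~ true] = set0.
      by apply/setP => u; rewrite !inE andbF.
    rewrite cards0 (pe_deg Hv) Hcnt subr0.
    case: ifP => vn //.
      case: eqP => [v0|/eqP v0] /=.
        by rewrite (_ : nat_of_ord v = 0%N).
      rewrite lt0n v0 /=; move: (y v) (Hy _ vn) => a ha; lia.
    have -> : (0 < v)%N by move: vn n1 => /negbT; case: v => [v1 Hv1] /=; lia.
    by [].
  move=> d; split.
    case=> [->|[i ->]].
      have nm : (n < m)%N by rewrite /m; move: Hsz Hy2; lia.
      by exists (Ordinal nm); rewrite Hdeg /= ltnn.
    have im : (i < m)%N by rewrite /m; move: Hsz Hy2 (ltn_ord i); lia.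
    exists (Ordinal im); rewrite Hdeg /= ltn_ord.
    by rewrite (yi i); have := xgt1 i; lia.
  case=> v; rewrite Hdeg; case: ifP => vn <-; last by left.
  right; exists (Ordinal vn).
  rewrite (_ : y v = y (Ordinal vn)) // yi; have := xgt1 (Ordinal vn); lia.
- move=> N e s [[N0 [esym eirr] _ eacyc] _] Hr.
  have Hg1 : forall v, 1 <= sdeg e s v.
    move=> v; case: ((Hr (sdeg e s v)).2 (ex_intro _ v erefl)) => [->//|[i ->]].
    by apply: ltW.
  pose deg v := #|[set u | e v u]|.
  have Hgd : forall v, sdeg e s v <= (deg v)%:Z.
    move=> v; rewrite /sdeg.
    have : (#|[set u | e v u && s v u]| <= deg v)%N.
      by apply: subset_leq_card; apply/subsetP => u; rewrite !inE => /andP [].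
    lia.
  have Heb : (\sum_v deg v + 2 <= 2 * N)%N.
    have HS : #|[set: 'I_N]| = N.-1.+1 by rewrite cardsT card_ord; lia.
    have := edge_bound esym eirr eacyc HS.
    rewrite cardsT card_ord.
    rewrite (eq_bigl (fun _ => true)); last by move=> v; rewrite in_setT.
    rewrite (eq_bigr deg) //.
    move=> v _; rewrite /degS /deg card_sum_bool.
    by apply: eq_bigl => u; rewrite in_setT.
  have Hf : forall i, exists v, sdeg e s v == x i.
    move=> i; have [v Hv'] := (Hr (x i)).1 (or_intror (ex_intro _ i erefl)).
    by exists v; apply/eqP.
  pose f i := xchoose (Hf i).
  have Hfx : forall i, sdeg e s (f i) = x i by move=> i; exact: (eqP (xchooseP (Hf i))).
  have finj : injective f.
    by move=> i j Hij; apply: xinj; rewrite -!Hfx Hij.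
  have L1 : \sum_(i < n) (x i - 1) <= \sum_v (sdeg e s v - 1).
    rewrite (bigID (mem (f @: setT))) /=.
    rewrite big_imset /=; last by move=> i j _ _; apply: finj.
    rewrite (eq_bigr (fun i => sdeg e s (f i) - 1)); last by move=> i _; rewrite Hfx.
    rewrite -[X in X <= _]addr0; apply: lerD.
      by under [X in _ <= X]eq_bigl => i do rewrite in_setT.
    by apply: sumr_ge0 => v _; rewrite subr_ge0.
  have L2 : \sum_v (sdeg e s v - 1) <= \sum_v ((deg v)%:Z - 1).
    by apply: ler_sum => v _; rewrite lerD2r.
  have L3 : \sum_v ((deg v)%:Z - 1) = ((\sum_v deg v)%N)%:Z - N%:Z.
    rewrite sumrB sumr_const card_ord (big_morph Posz PoszD (erefl 0%:Z)).
    move: (\sum_v (deg v)%:Z) => a; lia.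
  have L4 : \sum_(i < n) (x i - 1) = \sum_(i < n) x i - n%:Z.
    rewrite sumrB sumr_const card_ord.
    move: (\sum_(i < n) x i) => a; lia.
  move: L1 L2; rewrite L3 L4.
  move: Heb Hm; move: (\sum_v deg v)%N => Sd.
  move: (\sum_(i < n) x i) => Sx; move: (\sum_v (sdeg e s v - 1)) => Sg.
  rewrite /m; lia.
Qed.
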